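(* Let $n\ge3$ and let $f$ be a $\gamma_{tr3}(P_3\square P_n)$-function such that the number of vertices $v$ with $f(v)=\emptyset$ is minimum among all $\gamma_{tr3}(P_3\square P_n)$-functions. Then $|f((i,j))|\le2$ for all $i\in\{0,1\}$ and $j\in\{0,1,\dots,n-1\}$.
   Context: $P_m$ denotes the directed path with vertex set $\{0,1,\dots,m-1\}$ and arcs $(i,i+1)$ for $0\le i\le m-2$. The Cartesian product $D_1\square D_2$ has vertex set $V(D_1)\times V(D_2)$, with an arc from $(x_1,y_1)$ to $(x_2,y_2)$ iff either $(x_1,x_2)$ is an arc of $D_1$ and $y_1=y_2$, or $x_1=x_2$ and $(y_1,y_2)$ is an arc of $D_2$. For a digraph $D$ and positive integer $k$, a $k$-rainbow dominating function on $D$ is $f:V(D)\to\mathcal P(\{1,\dots,k\})$ such that every $v$ with $f(v)=\emptyset$ satisfies $\bigcup_{u\in N^-(v)}f(u)=\{1,\dots,k\}$, where $N^-(v)$ is the set of in-neighbors of $v$; its weight is $\sum_v|f(v)|$. It is total if additionally the subdigraph induced by $\{v:f(v)\ne\emptyset\}$ has no isolated vertex (a vertex with neither in- nor out-neighbors in it). $\gamma_{trk}(D)$ is the minimum weight of a total $k$-rainbow dominating function, and a $\gamma_{trk}(D)$-function is one attaining it. *)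

(* Defs.v *)
From mathcomp Require Import all_boot.
Set Implicit Arguments. Unset Strict Implicit. Unset Printing Implicit Defensive.

Definition path_arc (m : nat) : rel 'I_m := fun a b => val b == (val a).+1.

Definition cart_arc (T1 T2 : finType) (a1 : rel T1) (a2 : rel T2) : rel (T1 * T2) :=
  fun x y => (a1 x.1 y.1 && (x.2 == y.2)) || ((x.1 == y.1) && a2 x.2 y.2).

(* k-rainbow dominating function: f : V -> subsets of {1..k} (encoded as 'I_k). *)
Definition is_kRDF (T : finType) (arc : rel T) (k : nat) (f : T -> {set 'I_k}) : Prop :=
  forall v, f v = set0 -> \bigcup_(u | arc u v) f u = [set: 'I_k].

(* Total: the subdigraph induced by nonempty-labelled vertices has no isolated vertex. *)
Definition is_total (T : finType) (arc : rel T) (k : nat) (f : T -> {set 'I_k}) : Prop :=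
  forall v, f v != set0 ->
    exists u, (f u != set0) && (arc u v || arc v u).

Definition is_TkRDF (T : finType) (arc : rel T) (k : nat) (f : T -> {set 'I_k}) : Prop :=
  is_kRDF arc f /\ is_total arc f.

Definition rdf_weight (T : finType) (k : nat) (f : T -> {set 'I_k}) : nat :=
  \sum_(v : T) #|f v|.

Definition is_gamma_trk_fun (T : finType) (arc : rel T) (k : nat) (f : T -> {set 'I_k}) : Prop :=
  is_TkRDF arc f /\ forall g : T -> {set 'I_k}, is_TkRDF arc g -> rdf_weight f <= rdf_weight g.

Definition num_empty (T : finType) (k : nat) (f : T -> {set 'I_k}) : nat :=
  #|[set v | f v == set0]|.

Definition P3Pn_arc (n : nat) : rel ('I_3 * 'I_n) := cart_arc (@path_arc 3) (@path_arc n).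

(* Main.v *)
Require Import Defs.
From mathcomp Require Import all_boot.
From mathcomp Require Import zify.

Lemma gen_valid (T : finType) (arc : rel T) k (f g : T -> {set 'I_k}) v :
  is_TkRDF arc f ->
  (forall w, w != v -> f w \subset g w) ->
  g v != set0 ->
  (forall u, arc v u -> g u != set0) ->
  (forall u, g u != set0 -> f u = set0 -> arc v u) ->
  is_TkRDF arc g.
Proof.
move=> [dom tot] sub gv out new; split.
- move=> u gu0.
  have uv : u != v by apply/eqP=> E; subst; rewrite gu0 eqxx in gv.
  have fu0 : f u = set0 by apply/eqP; rewrite -subset0 -gu0 sub.
  apply/eqP; rewrite eqEsubset subsetT /= -(dom u fu0).
  apply/subsetP=> x /bigcupP [w wu xw].
  have wv : w != v by apply/eqP=> E; subst; move: (out u wu); rewrite gu0 eqxx.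
  by apply/bigcupP; exists w => //; apply: (subsetP (sub w wv)).
- move=> u gu.
  case: (eqVneq (f u) set0) => fu.
  + by exists v; rewrite gv (new u gu fu).
  + have [w /andP [fw aw]] := tot u fu.
    exists w; rewrite aw andbT.
    case: (eqVneq w v) => [->|wv] //.
    apply/negP => /eqP gw0; have := sub w wv; rewrite gw0 subset0 => fw0.
    by rewrite fw0 in fw.
Qed.

Lemma out_det n (v u1 u2 : 'I_3 * 'I_n) :
  P3Pn_arc v u1 -> P3Pn_arc v u2 -> (u1.1 == v.1) = (u2.1 == v.1) -> u1 = u2.
Proof.
case: v => x y; case: u1 => x1 y1; case: u2 => x2 y2.
rewrite /P3Pn_arc /cart_arc /path_arc /=.
move=> /orP[/andP[/eqP a1 /eqP b1]|/andP[/eqP a1 /eqP b1]]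
       /orP[/andP[/eqP a2 /eqP b2]|/andP[/eqP a2 /eqP b2]] h.
- by subst; congr pair; apply: ord_inj; rewrite a1 a2.
- subst; move: h; rewrite eqxx => /eqP e.
  have : nat_of_ord x1 = nat_of_ord x2 by rewrite e.
  rewrite a1; lia.
- subst; move: h; rewrite eqxx => /esym/eqP e.
  have : nat_of_ord x2 = nat_of_ord x1 by rewrite e.
  rewrite a2; lia.
- by subst; congr pair; apply: ord_inj; rewrite b1 b2.
Qed.

Lemma card_sum (T : finType) (P : pred T) :
  #|[set w | P w]| = \sum_w (P w : nat).
Proof.
rewrite -sum1_card big_mkcond /=; apply: eq_bigr => w _; rewrite inE.
by case: (P w).
Qed.

Theorem lemma4p8 (n : nat) (hn : 3 <= n) (f : 'I_3 * 'I_n -> {set 'I_3}) :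
  is_gamma_trk_fun (@P3Pn_arc n) f ->
  (forall g : 'I_3 * 'I_n -> {set 'I_3},
      is_gamma_trk_fun (@P3Pn_arc n) g -> num_empty f <= num_empty g) ->
  forall (i : 'I_3) (j : 'I_n), val i <= 1 -> #|f (i, j)| <= 2.
Proof.
move=> [fT fmin] fE i j _.
rewrite leqNgt; apply/negP => H.
set v := (i, j).
have fv3 : #|f v| = 3.
  have h1 := max_card (f v); rewrite card_ord in h1; by apply/eqP; rewrite eqn_leq h1.
have fv0 : f v != set0 by apply/eqP => e; move: fv3; rewrite e cards0.
set e := fun w => P3Pn_arc v w && (f w == set0).
set g := fun w => if (w == v) || e w then [set ord0 : 'I_3] else f w.
have s10 : [set ord0 : 'I_3] != set0.
  by apply/eqP => e0; have := cards1 (ord0 : 'I_3); rewrite e0 cards0.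
have gT : is_TkRDF (@P3Pn_arc n) g.
  apply: (@gen_valid _ _ _ f g v fT).
  - move=> w wv; rewrite /g (negbTE wv) /=; case ew: (e w); last exact: subxx.
    by move: ew => /andP[_ /eqP ->]; rewrite sub0set.
  - by rewrite /g eqxx.
  - move=> u au; rewrite /g; case: ifP => // /norP [_].
    by rewrite /e au /=.
  - move=> u; rewrite /g; case: ifP => [/orP[/eqP -> _ fv|/andP[]//]|].
      by rewrite fv eqxx in fv0.
    by move=> _ /eqP.
pose E := [set w | e w].
have ev : e v = false by rewrite /e (negbTE fv0) andbF.
have Wg : rdf_weight g + 2 = rdf_weight f + #|E|.
  have pw : forall w, #|g w| + 2 * (w == v) = #|f w| + e w.
    move=> w; rewrite /g; case: (eqVneq w v) => [->|wv] /=.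
      by rewrite ev fv3 cards1.
    case ew: (e w); last by rewrite addn0.
    by move: ew => /andP[_ /eqP ->]; rewrite cards1 cards0.
  rewrite /rdf_weight card_sum -big_split /=.
  rewrite (eq_bigr _ (fun w _ => esym (pw w))) big_split /=.
  congr (_ + _); rewrite (bigD1 v) //= eqxx big1 // => w /negbTE -> //.
have Eg : num_empty g + #|E| = num_empty f.
  rewrite /num_empty !card_sum -big_split /=; apply: eq_bigr => w _.
  rewrite /g; case: (eqVneq w v) => [->|wv] /=.
    by rewrite ev (negbTE fv0) (negbTE s10).
  case ew: (e w) => /=; last by rewrite addn0.
  by move: ew => /andP[_ /eqP ->]; rewrite (negbTE s10) eqxx.
have E2 : #|E| <= 2.
  have <- : #|[set (u.1 == v.1) | u in E]| = #|E|.
    apply: card_in_imset => u1 u2; rewrite !inE => /andP[a1 _] /andP[a2 _] h.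
    exact: out_det a1 a2 h.
  by apply: leq_trans (max_card _) _; rewrite card_bool.
have := fmin g gT.
case: (ltnP #|E| 2) => hE hW; first lia.
have gG : is_gamma_trk_fun (@P3Pn_arc n) g.
  by split => // h hT; have := fmin h hT; lia.
have := fE g gG; lia.
Qed.
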